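(* For every $d\ge 1$, the class of $d$-CBU graphs is strictly contained in the class of $(d+1)$-CBU graphs.
   Context: Let $e_1,\ldots,e_d$ be the standard basis of $\mathbb{R}^d$. For $d\ge 1$, a graph belongs to $d$-CBU if one can assign to each vertex an axis-parallel box (product of $d$ closed intervals of positive length) in $\mathbb{R}^d$ such that the boxes have pairwise disjoint interiors, two distinct vertices are adjacent iff their boxes intersect, and any two intersecting boxes intersect in a $(d-1)$-dimensional box orthogonal to $e_1$. *)

(* Defs.v *)
From HB Require Import structures.
From mathcomp Require Import all_boot all_order all_algebra.
From mathcomp Require Import reals.
Set Implicit Arguments. Unset Strict Implicit. Unset Printing Implicit Defensive.
Import Order.TTheory GRing.Theory Num.Theory.
Local Open Scope ring_scope.

Definition simple_graph (T : finType) (e : rel T) : Prop :=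
  irreflexive e /\ symmetric e.

(* Points of R^d are functions 'I_d -> R; coordinate with index 0 is e_1. *)
Definition in_box (R : realType) (d : nat) (lo hi : 'I_d -> R) (x : 'I_d -> R) : Prop :=
  forall i, lo i <= x i <= hi i.

Definition in_box_int (R : realType) (d : nat) (lo hi : 'I_d -> R) (x : 'I_d -> R) : Prop :=
  forall i, lo i < x i < hi i.

Definition is_box_orth_e1 (R : realType) (d : nat) (A : ('I_d -> R) -> Prop) : Prop :=
  exists (c : R) (a b : 'I_d -> R),
    (forall i : 'I_d, val i != 0%N -> a i < b i) /\
    (forall x : 'I_d -> R,
        A x <-> (forall i : 'I_d, if val i == 0%N then x i = c else a i <= x i <= b i)).

Definition CBU (R : realType) (d : nat) (T : finType) (e : rel T) : Prop :=
  exists lo hi : T -> 'I_d -> R,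
    (forall v i, lo v i < hi v i) /\
    (forall u v, u != v ->
       ~ (exists x, in_box_int (lo u) (hi u) x /\ in_box_int (lo v) (hi v) x)) /\
    (forall u v, u != v ->
       (e u v <-> exists x, in_box (lo u) (hi u) x /\ in_box (lo v) (hi v) x)) /\
    (forall u v, u != v ->
       (exists x, in_box (lo u) (hi u) x /\ in_box (lo v) (hi v) x) ->
       is_box_orth_e1 (fun x => in_box (lo u) (hi u) x /\ in_box (lo v) (hi v) x)).

(* Main.v *)
Require Import Defs.
From HB Require Import structures.
From mathcomp Require Import all_boot all_order all_algebra.
From mathcomp Require Import reals.
From mathcomp Require Import zify ring lra.
Set Implicit Arguments. Unset Strict Implicit. Unset Printing Implicit Defensive.
Import Order.TTheory GRing.Theory Num.Theory.

Module Gen.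
Local Open Scope ring_scope.
Lemma common_pt (R : realType) n (l1 h1 l2 h2 : 'I_n -> R) :
  (forall i, l1 i <= h1 i) -> (forall i, l2 i <= h2 i) ->
  (forall i, l1 i <= h2 i /\ l2 i <= h1 i) ->
  exists x, in_box l1 h1 x /\ in_box l2 h2 x.
Proof.
move=> H1 H2 H; exists (fun i => Num.max (l1 i) (l2 i)); split => i;
  have [Ha Hb] := H i; rewrite le_max ge_max lexx ?orbT /= ?H1 ?H2 ?Ha ?Hb //.
Qed.

Lemma common_pt_inv (R : realType) n (l1 h1 l2 h2 : 'I_n -> R) x :
  in_box l1 h1 x -> in_box l2 h2 x -> forall i, l1 i <= h2 i /\ l2 i <= h1 i.
Proof.
move=> Hx1 Hx2 i; have /andP[a b] := Hx1 i; have /andP[c e] := Hx2 i; split; lra.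
Qed.

Lemma ord0_eq n (i : 'I_n.+1) : val i = 0%N -> i = ord0.
Proof. by move=> H; apply: val_inj. Qed.

Lemma GL (R : realType) (n : nat) (T : finType) (e : rel T) (lo hi : T -> 'I_n.+1 -> R) :
  (forall v i, lo v i < hi v i) ->
  (forall u v, u != v -> e u v -> forall i,
     if val i == 0%N then (hi u i = lo v i \/ hi v i = lo u i)
     else (lo u i < hi v i /\ lo v i < hi u i)) ->
  (forall u v, u != v -> ~~ e u v -> exists i, hi u i < lo v i \/ hi v i < lo u i) ->
  CBU R n.+1 e.
Proof.
move=> H0 H1 H2.
have Hw : forall v i, lo v i <= hi v i by move=> v i; apply: ltW.
have Hiff : forall u v, u != v -> (e u v <-> exists x, in_box (lo u) (hi u) x /\ in_box (lo v) (hi v) x).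
  move=> u v uv; split.
  - move=> euv; apply: common_pt => // i; have := H1 u v uv euv i.
    have A1 := H0 u i; have A2 := H0 v i; case: ifP => _; [case=> E | case=> E F]; split; lra.
  - move=> [x [Hu Hv]]; case E: (e u v) => //.
    have [i [F|F]] := H2 u v uv (negbT E); have [a b] := common_pt_inv Hu Hv i; lra.
exists lo, hi; split => //; split; last split => //.
- move=> u v uv [x [Hu Hv]].
  case E: (e u v).
  + have := H1 u v uv E ord0 => /= -[F|F]; have /andP[a b] := Hu ord0;
      have /andP[c f] := Hv ord0; lra.
  + have [i [F|F]] := H2 u v uv (negbT E); have /andP[a b] := Hu i;
      have /andP[c f] := Hv i; lra.
- move=> u v uv Hx; have euv : e u v by apply/(Hiff u v uv).
  have HH := H1 u v uv euv.
  have Hs : forall i, val i != 0%N -> lo u i < hi v i /\ lo v i < hi u i.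
    by move=> i /negbTE Hi; have := HH i; rewrite Hi.
  have : hi u ord0 = lo v ord0 \/ hi v ord0 = lo u ord0 by exact: (HH ord0).
  move=> Ht.
  pose c := if hi u ord0 == lo v ord0 then lo v ord0 else lo u ord0.
  exists c, (fun i => Num.max (lo u i) (lo v i)), (fun i => Num.min (hi u i) (hi v i)).
  split.
    move=> i /Hs [a b]; rewrite gt_max !lt_min H0 H0 a b //.
  move=> x; split.
  + move=> [Hu Hv] i; case: ifP => Hi.
      have -> := ord0_eq (eqP Hi); have /andP[a b] := Hu ord0; have /andP[f g] := Hv ord0.
      have := H0 u ord0; have := H0 v ord0; rewrite /c.
      case: ifP => /eqP E; move: Ht => [F|F]; lra.
    have /andP[a b] := Hu i; have /andP[f g] := Hv i.
    by rewrite ge_max le_min a b f g.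
  + move=> Hx'; split => i; have := Hx' i; case: ifP => Hi.
    * have -> := ord0_eq (eqP Hi); have := H0 u ord0; have := H0 v ord0; rewrite /c.
      case: ifP => /eqP E; move: Ht => [F|F] => ? ? ->; rewrite ?lexx ?andbT ?andTb /=; lra.
    * by rewrite ge_max le_min => /andP[/andP[a b] /andP[f g]]; rewrite a f.
    * have -> := ord0_eq (eqP Hi); have := H0 u ord0; have := H0 v ord0; rewrite /c.
      case: ifP => /eqP E; move: Ht => [F|F] => ? ? ->; rewrite ?lexx ?andbT ?andTb /=; lra.
    * by rewrite ge_max le_min => /andP[/andP[a b] /andP[f g]]; rewrite b g.
Qed.
End Gen.
Import Gen.

Module P1.
Local Open Scope ring_scope.
Definition ext (R : realType) d (f : 'I_d -> R) (z : R) : 'I_d.+1 -> R :=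
  fun i => if unlift ord_max i is Some k then f k else z.

Lemma ext_lift (R : realType) d (f : 'I_d -> R) z k : ext f z (lift ord_max k) = f k.
Proof. by rewrite /ext liftK. Qed.

Lemma ext_max (R : realType) d (f : 'I_d -> R) z : ext f z ord_max = z.
Proof. by rewrite /ext unlift_none. Qed.

Lemma ord_split d (i : 'I_d.+1) : i = ord_max \/ exists k, i = lift ord_max k.
Proof. by case: (unliftP ord_max i) => [k ->|->]; [right; exists k|left]. Qed.

Lemma val_lift_max d (k : 'I_d) : val (lift ord_max k) = val k.
Proof. by rewrite /= /bump leqNgt ltn_ord. Qed.

Lemma in_box_ext (R : realType) d (l h : 'I_d -> R) y :
  in_box (ext l 0) (ext h 1) y <->
  in_box l h (fun k => y (lift ord_max k)) /\ (0 <= y ord_max <= 1).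
Proof.
split.
- move=> H; split; [move=> k; have := H (lift ord_max k); by rewrite !ext_lift
                   | have := H ord_max; by rewrite !ext_max].
- move=> [H1 H2] i; case: (ord_split i) => [->|[k ->]]; rewrite ?ext_max ?ext_lift //.
  all: try exact: H1.
Qed.

Lemma in_box_int_ext (R : realType) d (l h : 'I_d -> R) y :
  in_box_int (ext l 0) (ext h 1) y ->
  in_box_int l h (fun k => y (lift ord_max k)).
Proof. by move=> H k; have := H (lift ord_max k); rewrite !ext_lift. Qed.

Lemma part1 (R : realType) d (hd : (1 <= d)%N) (T : finType) (e : rel T) :
  CBU R d e -> CBU R d.+1 e.
Proof.
move=> [lo [hi [H0 [H1 [H2 H3]]]]].
exists (fun v => ext (lo v) 0), (fun v => ext (hi v) 1); split; [|split; [|split]].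
- move=> v i; case: (ord_split i) => [->|[k ->]]; rewrite ?ext_max ?ext_lift //.
  all: try exact: ltr01.
- move=> u v uv [x [Hu Hv]]; apply: (H1 u v uv).
  by exists (fun k => x (lift ord_max k)); split; apply: in_box_int_ext.
- move=> u v uv; rewrite (H2 u v uv); split.
  + move=> [x [Hu Hv]]; exists (ext x 0); split; apply/in_box_ext; rewrite ext_max lexx ler01;
      split => //; move=> k; rewrite ext_lift; [exact: Hu|exact: Hv].
  + move=> [y [/in_box_ext [Hu _] /in_box_ext [Hv _]]]; by exists (fun k => y (lift ord_max k)).
- move=> u v uv [y [/in_box_ext [Hu _] /in_box_ext [Hv _]]].
  have [c [a [b [Hab Heq]]]] := H3 u v uv (ex_intro _ _ (conj Hu Hv)).
  exists c, (ext a 0), (ext b 1); split.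
    move=> i; case: (ord_split i) => [->|[k ->]]; rewrite ?ext_max ?ext_lift ?ltr01 //.
    by rewrite val_lift_max; apply: Hab.
  move=> x; split.
  + move=> [/in_box_ext [Hu' Hu2] /in_box_ext [Hv' _]] i.
    have := proj1 (Heq (fun k => x (lift ord_max k))) (conj Hu' Hv').
    case: (ord_split i) => [->|[k ->]] Hk.
      by rewrite /= ext_max ext_max; have -> : (d == 0%N) = false by case: (d) hd.
    by have := Hk k; rewrite val_lift_max !ext_lift.
  + move=> Hx.
    have Hm : 0 <= x ord_max <= 1.
      by have := Hx ord_max; rewrite /= !ext_max; have -> : (d == 0%N) = false by case: (d) hd.
    have Hr : in_box (lo u) (hi u) (fun k => x (lift ord_max k)) /\
              in_box (lo v) (hi v) (fun k => x (lift ord_max k)).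
      apply/Heq => k; have := Hx (lift ord_max k); by rewrite val_lift_max !ext_lift.
    by split; apply/in_box_ext; split => //; case: Hr.
Qed.
End P1.
Import P1.

Module P2.
Local Open Scope ring_scope.
Definition V d := (bool * option ('I_d * bool))%type.
Definition crown d : rel (V d) := fun u v => (u.1 != v.1) && (u.2 != v.2).
Arguments crown : clear implicits.

Lemma crown_simple d : simple_graph (crown d).
Proof. split; first by move=> [s p]; rewrite /crown /= eqxx. by move=> u v; rewrite /crown eq_sym [u.2 == _]eq_sym. Qed.

Lemma crown_not (R : realType) d : ~ CBU R d (crown d).
Proof.
move=> [lo [hi [H0 [H1 [H2 H3]]]]].
pose a (p : option ('I_d * bool)) : V d := (false, p).
pose b (p : option ('I_d * bool)) : V d := (true, p).
pose Cls p (c : 'I_d * bool) := if c.2 then hi (a p) c.1 < lo (b p) c.1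
                                 else hi (b p) c.1 < lo (a p) c.1.
have fP : forall p, exists c, Cls p c.
  move=> p.
  have nab : a p != b p by [].
  have nc : ~ (exists x, in_box (lo (a p)) (hi (a p)) x /\ in_box (lo (b p)) (hi (b p)) x).
    by move/(H2 _ _ nab); rewrite /crown /a /b /= eqxx.
  have [/existsP [i Hi] | /existsPn Hn] :=
     boolP [exists i, (hi (a p) i < lo (b p) i) || (hi (b p) i < lo (a p) i)].
    by case/orP: Hi => Hi; [exists (i, true) | exists (i, false)].
  exfalso; apply: nc; apply: common_pt.
  - by move=> i; apply: ltW.
  - by move=> i; apply: ltW.
  - move=> i; have := Hn i; rewrite negb_or -!leNgt => /andP[u v]; by split.
have edge : forall p q, p != q -> forall i, lo (b q) i <= hi (a p) i /\ lo (a p) i <= hi (b q) i.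
  move=> p q pq i.
  have nab : a p != b q by [].
  have [x [Hx1 Hx2]] : exists x, in_box (lo (a p)) (hi (a p)) x /\ in_box (lo (b q)) (hi (b q)) x.
    by apply/(H2 _ _ nab); rewrite /crown /= pq.
  have [u v] := common_pt_inv Hx1 Hx2 i; by split.
pose f p := xchoose (fP p).
have finj : injective f.
  move=> p q Hf; apply/eqP/negPn/negP => pq.
  have Cp := xchooseP (fP p); have Cq := xchooseP (fP q).
  rewrite -/(f p) in Cp; rewrite -/(f q) in Cq; rewrite Hf in Cp.
  have qp : q != p by rewrite eq_sym.
  move: Cp Cq; rewrite /Cls; case: (f q) => i [] /= Cp Cq.
  + have [e1 _] := edge p q pq i; have [e2 _] := edge q p qp i; clear -e1 e2 Cp Cq; lra.
  + have [_ e1] := edge p q pq i; have [_ e2] := edge q p qp i; clear -e1 e2 Cp Cq; lra.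
have := leq_card f finj; rewrite card_option card_prod card_ord card_bool.
lia.
Qed.
End P2.
Import P2.

Module P3.
Definition NN d := (2 * d - 1)%N.
Definition slot d (j : 'I_d) (s : bool) : nat :=
  if val j == 0 then (if s then NN d else 0) else (2 * j - 1 + s)%N.
Definition cen d (j : 'I_d) (s : bool) (k : nat) : nat :=
  if val j == k.-1 then (if s then 28 else 12) else if val j == 0 then (if s then 23 else 17) else 20.

Definition Lo d (v : V d) (k : nat) : nat :=
  match v with
  | (false, None) => if k == 0 then 3 else 0
  | (true, None) => 0
  | (false, Some (j, s)) => if k == 0 then 1 else if k == 1 then (if val j == 0 then (if s then 8 else 14) else 8)
                            else cen j s k - 2
  | (true, Some (j, s)) => if k == 0 then 2 else if k == 1 then 6 * slot j s + 10
                           else (if val j == k.-1 then (if s then 8 else 16) else 8)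
  end.
Definition Hi d (v : V d) (k : nat) : nat :=
  match v with
  | (false, None) => if k == 0 then 4 else if k == 1 then 6 * NN d + 30 else 40
  | (true, None) => if k == 0 then 1 else if k == 1 then 6 * NN d + 30 else 40
  | (false, Some (j, s)) => if k == 0 then 2 else if k == 1 then (if val j == 0 then (if s then 6 * NN d + 7 else 6 * NN d + 14) else 6 * NN d + 14)
                            else cen j s k + 2
  | (true, Some (j, s)) => if k == 0 then 3 else if k == 1 then 6 * slot j s + 12
                           else (if val j == k.-1 then (if s then 24 else 32) else 32)
  end.

Ltac crush := rewrite /Lo /Hi /cen /slot /NN /=; simpl in *; repeat (case: eqP => ?); try lia.

Lemma C0 d (v : V d) k : (Lo v k < Hi v k)%N.
Proof. case: v => [[] [[j []]|]]; try have := ltn_ord j; crush. Qed.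

Lemma core1 d (hd : (1 <= d)%N) (p q : option ('I_d * bool)) k :
  p != q -> (k <= d)%N -> k != 0%N ->
  (Lo (false, p) k < Hi (true, q) k)%N /\ (Lo (true, q) k < Hi (false, p) k)%N.
Proof.
case: p => [[j s]|]; case: q => [[j' s']|] //= pq kd k0.
- have jd := ltn_ord j; have jd' := ltn_ord j'.
  have H : (val j != val j') || (s != s').
    apply: contraR pq; rewrite negb_or !negbK => /andP[/eqP/val_inj -> /eqP ->]; exact: eqxx.
  move: H; clear pq; case: s; case: s' => /= H; crush.
- have := ltn_ord j; case: s; crush.
- have := ltn_ord j'; case: s'; crush.
Qed.

Lemma pair_neq d (j j' : 'I_d) (s s' : bool) :
  (j, s) != (j', s') -> (val j != val j') || (s != s').
Proof. apply: contraR; rewrite negb_or !negbK => /andP[/eqP/val_inj -> /eqP ->]; exact: eqxx. Qed.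

Lemma sepA d (j j' : 'I_d) (s s' : bool) : (j, s) != (j', s') ->
  exists k, (k <= d)%N /\ ((Hi (false, Some (j, s)) k < Lo (false, Some (j', s')) k)%N \/
                          (Hi (false, Some (j', s')) k < Lo (false, Some (j, s)) k)%N).
Proof.
move/pair_neq => H; have jd := ltn_ord j; have jd' := ltn_ord j'.
have [j0|j0] := eqVneq (nat_of_ord j) 0%N.
  have [j'0|j'0] := eqVneq (nat_of_ord j') 0%N.
    have [d1|d2] := leqP d 1%N.
      exists 1%N; split; first lia.
      move: H; case: s; case: s' => /= H; crush.
    exists 2%N; split; first lia.
    move: H; case: s; case: s' => /= H; crush.
  exists (nat_of_ord j').+1; split; first lia.
  move: H; case: s; case: s' => /= H; crush.
exists (nat_of_ord j).+1; split; first lia.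
move: H; case: s; case: s' => /= H; crush.
Qed.

Lemma sepB d (j j' : 'I_d) (s s' : bool) : (j, s) != (j', s') ->
  exists k, (k <= d)%N /\ ((Hi (true, Some (j, s)) k < Lo (true, Some (j', s')) k)%N \/
                          (Hi (true, Some (j', s')) k < Lo (true, Some (j, s)) k)%N).
Proof.
move/pair_neq => H; have jd := ltn_ord j; have jd' := ltn_ord j'.
exists 1%N; split; first lia.
move: H; case: s; case: s' => /= H; crush.
Qed.

Lemma sepAB d (j : 'I_d) (s : bool) :
  exists k, (k <= d)%N /\ ((Hi (true, Some (j, s)) k < Lo (false, Some (j, s)) k)%N \/
                          (Hi (false, Some (j, s)) k < Lo (true, Some (j, s)) k)%N).
Proof.
have jd := ltn_ord j.
have [j0|j0] := eqVneq (nat_of_ord j) 0%N.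
  exists 1%N; split; first lia. case: s; crush.
exists (nat_of_ord j).+1; split; first lia. case: s; crush.
Qed.

Lemma core0 d (p q : option ('I_d * bool)) :
  p != q -> Hi (false, p) 0 = Lo (true, q) 0 \/ Hi (true, q) 0 = Lo (false, p) 0.
Proof. case: p => [[j s]|]; case: q => [[j' s']|] //= _; crush. Qed.

Lemma C2 d (u v : V d) : u != v -> ~~ crown d u v ->
  exists k, (k <= d)%N /\ ((Hi u k < Lo v k)%N \/ (Hi v k < Lo u k)%N).
Proof.
case: u => s1 p1; case: v => s2 p2 uv.
rewrite /crown /= negb_and !negbK.
case: s1 uv; case: s2; case: p1 => [[j s]|]; case: p2 => [[j' s']|] => uv nc;
  try by (exists 0%N; split; [lia | crush]); try by move: uv; rewrite eqxx.
all: try by move: nc.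
- have : (j, s) != (j', s') by apply: contra uv => /eqP ->.
  by move=> H; exact: (sepB H).
- have [-> ->] : j = j' /\ s = s' by move: nc => /orP [//|/eqP [-> ->]].
  have [k [kd H]] := sepAB j' s'; exists k; split => //; case: H; tauto.
- have [-> ->] : j = j' /\ s = s' by move: nc => /orP [//|/eqP [-> ->]].
  have [k [kd H]] := sepAB j' s'; exists k; split => //; case: H; tauto.
- have : (j, s) != (j', s') by apply: contra uv => /eqP ->.
  by move=> H; exact: (sepA H).
Qed.

Local Open Scope ring_scope.
Lemma crown_CBU (R : realType) d (hd : (1 <= d)%N) : CBU R d.+1 (crown d).
Proof.
apply: (@GL R d (V d) (crown d) (fun v i => (Lo v (val i))%:R) (fun v i => (Hi v (val i))%:R)).
- by move=> v i; rewrite ltr_nat C0.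
- move=> [s1 p1] [s2 p2] uv /andP [ss pq] i; simpl in ss, pq.
  have qp : p2 != p1 by rewrite eq_sym.
  have kd : (val i <= d)%N by rewrite -ltnS ltn_ord.
  case: ifP => Hi0.
  + rewrite (eqP Hi0); case: s1 ss uv; case: s2 => // _ _.
    * by case: (core0 qp) => ->; [right|left].
    * by case: (core0 pq) => ->; [left|right].
  + have k0 : val i != 0%N by rewrite Hi0.
    case: s1 ss uv; case: s2 => // _ _.
    * by have [A B] := core1 hd qp kd k0; rewrite !ltr_nat A B.
    * by have [A B] := core1 hd pq kd k0; rewrite !ltr_nat A B.
- move=> u v uv nc; have [k [kd H]] := C2 uv nc; exists (inord k).
  by rewrite /= inordK ?ltnS // !ltr_nat.
Qed.
End P3.
Import P3.

Theorem mainTheorem7 (R : realType) (d : nat) (hd : (1 <= d)%N) :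
  (forall (T : finType) (e : rel T), simple_graph e -> CBU R d e -> CBU R d.+1 e) /\
  (exists (T : finType) (e : rel T), simple_graph e /\ CBU R d.+1 e /\ ~ CBU R d e).
Proof.
split.
- by move=> T e _; apply: part1.
- exists (V d : finType), (crown d); split; first exact: crown_simple.
  split; [exact: crown_CBU | exact: crown_not].
Qed.
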